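(* Let $V$ be an infinite-dimensional vector space over a field $\mathbb{F}$. Let $a,b,c$ be quadratic endomorphisms of $V$, and let $\lambda\in\mathbb{F}$ and $w\in\mathrm{End}(V)$ be such that $\lambda\,\mathrm{id}_V+w=a+b+c$ and $\operatorname{rk}w<\dim V$. Let $W$ be a linear subspace of $V$ with $\operatorname{im}w\subset W$ and $\dim W<\dim V$. Then there exists a linear subspace $\overline{W}$ of $V$ with $W\subset\overline{W}$, $\dim\overline{W}<\dim V$, and $\overline{W}$ stable under $a$, $b$ and $c$. Moreover, if $W$ is finite-dimensional then $\overline{W}$ can be chosen finite-dimensional.
   Context: An endomorphism $e$ of $V$ is quadratic if $p(e)=0$ for some polynomial $p\in\mathbb{F}[t]$ of degree $2$. *)

(* Defs.v *)
From HB Require Import structures.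
From mathcomp Require Import all_boot all_order all_algebra.
From mathcomp Require Import boolp classical_sets cardinality.
Set Implicit Arguments. Unset Strict Implicit. Unset Printing Implicit Defensive.
Import GRing.Theory.
Local Open Scope ring_scope.
Local Open Scope classical_set_scope.

Definition subspace (F : fieldType) (V : lmodType F) (U : set V) : Prop :=
  U 0 /\ (forall x y, U x -> U y -> U (x + y)) /\
  (forall (k : F) x, U x -> U (k *: x)).

Definition lin_indep (F : fieldType) (V : lmodType F) (B : set V) : Prop :=
  forall (s : seq V) (c : V -> F), uniq s -> (forall v, v \in s -> B v) ->
    \sum_(v <- s) c v *: v = 0 -> forall v, v \in s -> c v = 0.

Definition spans (F : fieldType) (V : lmodType F) (B U : set V) : Prop :=
  forall x, U x -> exists (s : seq V) (c : V -> F),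
    (forall v, v \in s -> B v) /\ x = \sum_(v <- s) c v *: v.

Definition is_basis (F : fieldType) (V : lmodType F) (U B : set V) : Prop :=
  B `<=` U /\ lin_indep B /\ spans B U.

(* dim U < dim U' (cardinal dimensions, via bases; well-defined since all
   bases of a space have the same cardinality). *)
Definition dim_lt (F : fieldType) (V : lmodType F) (U U' : set V) : Prop :=
  exists B B', is_basis U B /\ is_basis U' B' /\ ~ card_le B' B.

Definition finite_dim (F : fieldType) (V : lmodType F) (U : set V) : Prop :=
  exists B, is_basis U B /\ finite_set B.

Definition infinite_dim (F : fieldType) (V : lmodType F) (U : set V) : Prop :=
  exists B, is_basis U B /\ infinite_set B.

Definition poly_end (F : fieldType) (V : lmodType F) (p : {poly F})
  (e : {linear V -> V}) (v : V) : V :=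
  \sum_(i < size p) p`_i *: iter i e v.

Definition quadratic (F : fieldType) (V : lmodType F) (e : {linear V -> V}) : Prop :=
  exists p : {poly F}, size p = 3%N /\ forall v, poly_end p e v = 0.

Definition stable (F : fieldType) (V : lmodType F) (e : {linear V -> V}) (U : set V) : Prop :=
  e @` U `<=` U.

(* Main.v *)
Require Import Defs.
From HB Require Import structures.
From mathcomp Require Import all_boot all_order all_algebra.
From mathcomp Require Import boolp classical_sets cardinality functions.
From mathcomp Require Import zify.
Import GRing.Theory.
Local Open Scope ring_scope.
Local Open Scope classical_set_scope.
Section Card.
Local Open Scope card_scope.

Lemma inf_seq (T : Type) (A : set T) : infinite_set A ->
  exists e : nat -> T, (forall n, A (e n)) /\ injective e.
Proof.
move=> /infiniteP /pcard_surjP [g gs].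
have /choice [e he] : forall n : nat, exists x, A x /\ g x = n.
  move=> n; have [x Ax gx] := gs n I; by exists x.
exists e; split; first by move=> n; case: (he n).
by move=> n m enm; rewrite -(he n).2 -(he m).2 enm.
Qed.

Lemma fin_inj (T : Type) (R : set T) : finite_set R ->
  exists k (phi : T -> nat), (forall x, R x -> (phi x < k)%N) /\
     {in R &, injective phi}.
Proof.
move=> [k]; rewrite card_eq_le => /andP [le _].
move/pcard_leP: le => [f].
exists k, f; split.
  move=> x Rx; exact: (@funS _ _ _ _ f x Rx).
move=> x y; rewrite !inE => Rx Ry; exact: (@inj _ _ _ f x y (mem_set Rx) (mem_set Ry)).
Qed.
End Card.
Lemma add4 (Z : zmodType) (x1 x2 x3 x4 y1 y2 y3 y4 : Z) :
  (x1 + x2 + x3 + x4) + (y1 + y2 + y3 + y4) = (x1 + y1) + (x2 + y2) + (x3 + y3) + (x4 + y4).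
Proof. by rewrite (addrACA x1) (addrACA (x1 + x2)) (addrACA (x1 + x2 + x3)). Qed.
Section Double.
Variables (T : choiceType) (A : set T).
Local Notation K := ((T * bool) * T)%type.

Definition gdom (G : set K) (x : T) := exists b y, G ((x, b), y).

Definition goodG (G : set K) :=
  [/\ (forall x b y, G ((x, b), y) -> A x),
      (forall x b y, G ((x, b), y) -> gdom G y),
      (forall x b, gdom G x -> exists y, G ((x, b), y)),
      (forall p y y', G (p, y) -> G (p, y') -> y = y') &
      (forall p p' y, G (p, y) -> G (p', y) -> p = p')].

Lemma goodG_chain : forall F : set (set K), F `<=` goodG ->
  total_on F subset -> goodG (\bigcup_(X in F) X).
Proof.
move=> F FP Ftot; split.
- by move=> x b y [X FX]; case: (FP _ FX) => h1 _ _ _ _ /h1.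
- move=> x b y [X FX]; case: (FP _ FX) => _ h2 _ _ _ /h2 [b' [z XG]].
  by exists b', z; exists X.
- move=> x b [b' [z [X FX XG]]].
  have [_ _ h3 _ _] := FP _ FX.
  have [y Xy] := h3 x b (ex_intro _ b' (ex_intro _ z XG)).
  by exists y; exists X.
- move=> p y y' [X FX Xy] [X' FX' Xy'].
  have [XX'|X'X] := Ftot _ _ FX FX'.
  + by have [_ _ _ h _] := FP _ FX'; apply: h (XX' _ Xy) Xy'.
  + by have [_ _ _ h _] := FP _ FX; apply: h Xy (X'X _ Xy').
- move=> p p' y [X FX Xy] [X' FX' Xy'].
  have [XX'|X'X] := Ftot _ _ FX FX'.
  + by have [_ _ _ _ h] := FP _ FX'; apply: h (XX' _ Xy) Xy'.
  + by have [_ _ _ _ h] := FP _ FX; apply: h Xy (X'X _ Xy').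
Qed.

Lemma double : infinite_set A -> exists f : T -> bool -> T,
  (forall x b, A x -> A (f x b)) /\
  (forall x y b b', A x -> A y -> f x b = f y b' -> x = y /\ b = b').
Proof.
move=> Ainf.
have [G [[G1 G2 G3 G4 G5] Gmax]] := Zorn_bigcup goodG_chain.
pose X := gdom G.
have XA : X `<=` A by move=> x [b [y /G1]].
have Rfin : finite_set (A `\` X).
  apply: contrapT => /inf_seq [e [eR einj]].
  pose N := [set p : K | exists n (bb : bool), p = ((e n, bb), e (n.*2 + bb)%N)].
  have eX n : ~ X (e n) by case: (eR n).
  have dbl n m (bb bb' : bool) : (n.*2 + bb = m.*2 + bb')%N -> n = m /\ bb = bb'.
    by case: bb; case: bb' => /=; rewrite -!muln2; lia.
  apply: (Gmax (G `|` N)).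
    split; first by move=> p Gp; left.
    move=> sub; have : (G `|` N) ((e 0%N, false), e 0%N).
      by right; exists 0%N, false.
    by move/sub => Gp; apply: (eX 0%N); exists false, (e 0%N).
  split.
  - move=> x b y [/G1 //|[n [bb [-> _ _]]]]; by case: (eR n).
  - move=> x b y [Gp|[n [bb [_ _ ->]]]].
      by have [b' [z Gz]] := G2 _ _ _ Gp; exists b', z; left.
    by exists false, (e ((n.*2 + bb).*2 + false)%N); right; exists (n.*2 + bb)%N, false.
  - move=> x b [b' [z [Gp|[n [bb [-> _ _]]]]]].
      by have [y Gy] := G3 x b (ex_intro _ b' (ex_intro _ z Gp)); exists y; left.
    by exists (e (n.*2 + b)%N); right; exists n, b.
  - move=> [x b] y y' [Gp|[n [bb [ex eb ->]]]] [Gp'|[n' [bb' [ex' eb' ->]]]].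
    + exact: G4 Gp Gp'.
    + by exfalso; apply: (eX n'); rewrite -ex'; exists b, y.
    + by exfalso; apply: (eX n); rewrite -ex; exists b, y'.
    + by move: ex; rewrite ex' => /einj ->; rewrite -eb -eb'.
  - move=> [x b] [x' b'] y [Gp|[n [bb [ex eb ey]]]] [Gp'|[n' [bb' [ex' eb' ey']]]].
    + exact: G5 Gp Gp'.
    + by exfalso; apply: (eX (n'.*2 + bb')%N); rewrite -ey'; apply: G2 Gp.
    + by exfalso; apply: (eX (n.*2 + bb)%N); rewrite -ey; apply: G2 Gp'.
    + move: ey; rewrite ey' => /einj /dbl [nn bbb].
      by rewrite ex ex' eb eb' nn bbb.
have Xinf : infinite_set X.
  move=> Xfin; apply: Ainf; apply: (@sub_finite_set _ A (X `|` (A `\` X))).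
    by move=> x Ax; case: (pselect (X x)) => Xx; [left|right].
  by rewrite finite_setU; split.
have [e [eX einj]] := @inf_seq _ _ Xinf.
have [k [phi [phik phiinj]]] := @fin_inj _ _ Rfin.
pose h x := if `[< (A `\` X) x >] then e (phi x)
   else if `[< exists n, x = e n >] then e (k + xget 0%N (fun n => x = e n))%N
   else x.
have hX x : A x -> X (h x).
  move=> Ax; rewrite /h; case: asboolP => [_|nR]; first exact: eX.
  case: asboolP => [_|_]; first exact: eX.
  case: (pselect (X x)) => // nX; by exfalso; apply: nR; split.
have xg x : (exists n, x = e n) -> x = e (xget 0%N (fun n => x = e n)).
  by move=> ex; apply: (xgetPex 0%N ex).
have hinj x y : A x -> A y -> h x = h y -> x = y.
  move=> Ax Ay; rewrite /h.
  case: (asboolP ((A `\` X) x)) => Rx; case: (asboolP ((A `\` X) y)) => Ry.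
  - by move/einj; apply: phiinj; rewrite inE.
  - case: (asboolP (exists n, y = e n)) => Ey.
      by move/einj => E; have := phik _ Rx; rewrite E; lia.
    by move=> E; exfalso; apply: Ey; exists (phi x).
  - case: (asboolP (exists n, x = e n)) => Ex.
      by move/einj => E; have := phik _ Ry; rewrite -E; lia.
    by move=> E; exfalso; apply: Ex; exists (phi y).
  - case: (asboolP (exists n, x = e n)) => Ex;
    case: (asboolP (exists n, y = e n)) => Ey.
    + move/einj => E; rewrite (xg _ Ex) (xg _ Ey); congr e; lia.
    + by move=> E; exfalso; apply: Ey; eexists; exact: (esym E).
    + by move=> E; exfalso; apply: Ex; eexists; exact: E.
    + by [].
pose f x b := xget x (fun y => G ((h x, b), y)).
have fG x b : A x -> G ((h x, b), f x b).
  move=> Ax; apply: (@xgetPex _ x (fun y => G ((h x, b), y))); apply: G3; exact: hX.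
exists f; split.
  by move=> x b Ax; apply: XA; have := G2 _ _ _ (fG x b Ax).
move=> x y b b' Ax Ay E.
have G' := fG y b' Ay; rewrite -E in G'.
have [hE ->] := G5 _ _ _ (fG x b Ax) G'.
by split => //; apply: hinj.
Qed.
End Double.
Section Card4.
Local Open Scope card_scope.
Lemma card_le4 (T : choiceType) (U' : Type) (B : set T) (f1 f2 f3 f4 : T -> T)
  (C : set U') : infinite_set B ->
  C #<= (f1 @` B `|` f2 @` B `|` f3 @` B `|` f4 @` B) -> C #<= B.
Proof.
move=> Binf CS.
pose g (p : T * (bool * bool)) := let: (x, (b1, b2)) := p in
  if b1 then (if b2 then f1 x else f2 x) else (if b2 then f3 x else f4 x).
pose D := B `*` [set: bool * bool].
have S1 : (f1 @` B `|` f2 @` B `|` f3 @` B `|` f4 @` B) #<= D.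
  apply: card_le_trans (card_image_le g D).
  apply: subset_card_le => y [[[|[x Bx <-]]|[x Bx <-]]|[x Bx <-]].
  - by case=> x Bx <-; exists (x, (true, true)).
  - by exists (x, (true, false)).
  - by exists (x, (false, true)).
  - by exists (x, (false, false)).
have [f [fB finj]] := @double _ _ Binf.
pose h (p : T * (bool * bool)) := f (f p.1 p.2.1) p.2.2.
have hinj : {in D &, injective h}.
  move=> [x [b1 b2]] [y [c1 c2]]; rewrite !inE => -[/= Bx _] [/= By _].
  rewrite /h /= => /finj [] //; try by apply: fB.
  by move=> /finj [] // -> -> ->.
have S2 : D #<= B.
  have := inj_card_eq hinj; rewrite card_eq_sym card_eq_le => /andP [le1 _].
  apply: card_le_trans le1 _; apply: subset_card_le.
  move=> _ [[x [b1 b2]] [/= Bx _] <-]; by rewrite /h /=; apply: (fB); apply: (fB).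
exact: card_le_trans CS (card_le_trans S1 S2).
Qed.
End Card4.
Set Implicit Arguments. Unset Strict Implicit.
Section Lin.
Variables (F : fieldType) (V : lmodType F).
Implicit Types (S B U Z : set V).

Definition lspan S : set V := fun x => exists l : seq (F * V),
  (forall p, p \in l -> S p.2) /\ x = \sum_(p <- l) p.1 *: p.2.

Lemma lspan0 S : lspan S 0.
Proof. by exists [::]; split => //; rewrite big_nil. Qed.

Lemma lspan_sub S x : S x -> lspan S x.
Proof.
move=> Sx; exists [:: (1, x)]; split; last by rewrite big_seq1 scale1r.
by move=> p; rewrite inE => /eqP ->.
Qed.

Lemma lspanD S x y : lspan S x -> lspan S y -> lspan S (x + y).
Proof.
move=> [l1 [h1 ->]] [l2 [h2 ->]]; exists (l1 ++ l2); split.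
  by move=> p; rewrite mem_cat => /orP [/h1|/h2].
by rewrite big_cat.
Qed.

Lemma lspanZ S k x : lspan S x -> lspan S (k *: x).
Proof.
move=> [l [h ->]]; exists [seq (k * p.1, p.2) | p <- l]; split.
  by move=> p /mapP [q /h Sq ->].
rewrite big_map scaler_sumr; apply: eq_bigr => p _; by rewrite scalerA.
Qed.

Lemma subspace_lspan S : subspace (lspan S).
Proof. split; first exact: lspan0. split; [exact: lspanD | exact: lspanZ]. Qed.

Lemma subspace_sum Z (s : seq V) (f : V -> V) : subspace Z ->
  (forall i, i \in s -> Z (f i)) -> Z (\sum_(i <- s) f i).
Proof.
move=> [Z0 [ZD _]]; elim: s => [|i s IH] h; first by rewrite big_nil.
rewrite big_cons; apply: ZD; first by apply: h; rewrite inE eqxx.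
by apply: IH => j js; apply: h; rewrite inE js orbT.
Qed.

Lemma subspace_sumP Z (s : seq (F * V)) (f : F * V -> V) : subspace Z ->
  (forall i, i \in s -> Z (f i)) -> Z (\sum_(i <- s) f i).
Proof.
move=> [Z0 [ZD _]]; elim: s => [|i s IH] h; first by rewrite big_nil.
rewrite big_cons; apply: ZD; first by apply: h; rewrite inE eqxx.
by apply: IH => j js; apply: h; rewrite inE js orbT.
Qed.

Lemma lspan_closed S Z : subspace Z -> S `<=` Z -> lspan S `<=` Z.
Proof.
move=> Zs SZ x [l [h ->]]; apply: subspace_sumP => // p /h Sp.
by case: Zs => _ [_ ZZ]; apply: ZZ; apply: SZ.
Qed.

Lemma lspan_spans B x : lspan B x -> exists (s : seq V) (c : V -> F),
  (forall v, v \in s -> B v) /\ x = \sum_(v <- s) c v *: v.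
Proof.
move=> [l [h xE]]; rewrite {x}xE; suff : exists (s : seq V) (c : V -> F), uniq s /\
  (forall v, v \in s -> B v) /\ \sum_(p <- l) p.1 *: p.2 = \sum_(v <- s) c v *: v.
  by move=> [s [c [_ [h1 h2]]]]; exists s, c.
elim: l h => [|[k v] l IH] h.
  by exists [::], (fun _ => 0); rewrite !big_nil.
rewrite big_cons /=.
have [|s [c [us [sB ->]]]] := IH.
  by move=> p pl; apply: h; rewrite inE pl orbT.
have Bv : B v by have := h (k, v); rewrite inE eqxx; apply.
case vs: (v \in s).
  exists s, (fun u => if u == v then c u + k else c u); split => //; split => //.
  rewrite [in RHS](bigD1_seq v) //= [in LHS](bigD1_seq v) //= eqxx.
  have -> : \sum_(i <- s | i != v) (if i == v then c i + k else c i) *: i =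
     \sum_(i <- s | i != v) c i *: i by apply: eq_bigr => i /negbTE ->.
  by rewrite scalerDl addrCA addrA.
exists (v :: s), (fun u => if u == v then k else c u); split.
  by rewrite /= vs.
split; first by move=> u; rewrite inE => /orP [/eqP ->|]; [|apply: sB].
rewrite big_cons eqxx; congr (_ + _); apply: eq_big_seq => u us'.
by case: eqP => // uv; move: us'; rewrite uv vs.
Qed.

Lemma spans_lspan B U : spans B U -> U `<=` lspan B.
Proof.
move=> sp x /sp [s [c [sB ->]]].
apply: subspace_sum; first exact: subspace_lspan.
by move=> v /sB Bv; apply: lspanZ; apply: lspan_sub.
Qed.

Lemma indep_ext B v : lin_indep B -> ~ lspan B v -> lin_indep (B `|` [set v]).
Proof.
move=> ind nv s c us sB sum0.
have sBv : forall u, u \in [seq x <- s | x != v] -> B u.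
  move=> u; rewrite mem_filter => /andP [uv /sB [//|/= uve]].
  by move: uv; rewrite uve eqxx.
case vs: (v \in s); last first.
  apply: ind => // u us'; case: (sB u us') => // /= uv.
  by move: us'; rewrite uv vs.
move: sum0; rewrite (bigD1_seq v) //= -big_filter => sum0.
have cv0 : c v = 0.
  apply: contrapT => /eqP cvn; apply: nv.
  have -> : v = - (c v)^-1 *: \sum_(i <- [seq x <- s | x != v]) c i *: i.
    move/eqP: sum0; rewrite addr_eq0 => /eqP E.
    have -> : \sum_(i <- [seq x <- s | x != v]) c i *: i = - (c v *: v).
      by rewrite E opprK.
    by rewrite scalerN scaleNr opprK scalerA mulVf // scale1r.
  apply: lspanZ; apply: subspace_sum; first exact: subspace_lspan.
  by move=> u /sBv Bu; apply: lspanZ; apply: lspan_sub.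
move: sum0; rewrite cv0 scale0r add0r => sum0.
have := ind _ c (filter_uniq _ us) sBv sum0.
move=> h u us'; case: (eqVneq u v) => [->//|uv].
by apply: h; rewrite mem_filter uv.
Qed.

Lemma chain_seq (FF : set (set V)) : total_on FF subset -> forall s : seq V,
  (forall u, u \in s -> (\bigcup_(X in FF) X) u) ->
  s = [::] \/ exists X, FF X /\ forall u, u \in s -> X u.
Proof.
move=> tot; elim => [|v s IH] h; first by left.
right; have [X0 FX0 X0v] := h v (mem_head _ _).
have [->|[X1 [FX1 X1s]]] := IH (fun u us => h u (@mem_behead _ (v :: s) u us)).
  by exists X0; split => // u; rewrite inE => /eqP ->.
have [X01|X10] := tot _ _ FX0 FX1.
  exists X1; split => // u; rewrite inE => /orP [/eqP ->|/X1s //].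
  exact: X01.
exists X0; split => // u; rewrite inE => /orP [/eqP ->//|/X1s].
exact: X10.
Qed.

Lemma basis_sub S : exists B, B `<=` S /\ lin_indep B /\ S `<=` lspan B.
Proof.
pose P := fun B : set V => B `<=` S /\ lin_indep B.
have [|B [[BS Bind] Bmax]] := @Zorn_bigcup _ P.
  move=> FF FP tot; split.
    by move=> x [X FX Xx]; apply: (FP _ FX).1.
  move=> s c us sB sum0 u us'.
  have [s0|[X [FX Xs]]] := @chain_seq _ tot s sB.
    by move: us'; rewrite s0.
  exact: (FP _ FX).2 s c us Xs sum0 u us'.
exists B; split => //; split => // v Sv.
apply: contrapT => nv; apply: (Bmax (B `|` [set v])).
  split; first by move=> x Bx; left.
  move=> sub; apply: nv; apply: lspan_sub.
  have : (B `|` [set v]) v by right.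
  by move/sub.
split; first by move=> x [/BS //|->].
exact: indep_ext.
Qed.

Lemma basis_of_span U S : subspace U -> S `<=` U -> U `<=` lspan S ->
  exists B, B `<=` S /\ is_basis U B.
Proof.
move=> Us SU US; have [B [BS [Bind SB]]] := basis_sub S.
exists B; split => //; split; first by move=> x /BS /SU.
split => // x Ux; apply: lspan_spans.
apply: (@lspan_closed S (lspan B) (subspace_lspan B) SB); exact: US.
Qed.

End Lin.
Lemma quad_rel (F : fieldType) (V : lmodType F) (e : {linear V -> V}) :
  quadratic e -> exists k0 k1 : F, forall v, e (e v) = k1 *: e v + k0 *: v.
Proof.
move=> [p [sp hp]].
have p2 : p`_2 != 0.
  have : lead_coef p != 0 by rewrite lead_coef_eq0 -size_poly_eq0 sp.
  by rewrite lead_coefE sp.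
exists (- (p`_0 / p`_2)), (- (p`_1 / p`_2)) => v.
have := hp v; rewrite /poly_end sp !big_ord_recr big_ord0 /= add0r => E.
apply: (scalerI p2).
have -> : p`_2 *: e (e v) = - (p`_0 *: v + p`_1 *: e v).
  by apply/eqP; rewrite -addr_eq0 addrC E.
rewrite scalerDr !scalerA !mulrN !(mulrC p`_2) -!mulrA mulVf // !mulr1.
by rewrite opprD addrC !scaleNr.
Qed.
Ltac uc D N Z := repeat first [apply D | apply N | apply Z].
Theorem lemma1 (F : fieldType) (V : lmodType F)
  (a b c w : {linear V -> V}) (lambda : F) (W : set V) :
  infinite_dim [set: V] ->
  quadratic a -> quadratic b -> quadratic c ->
  (forall v, lambda *: v + w v = a v + b v + c v) ->
  dim_lt (range w) [set: V] ->
  subspace W -> range w `<=` W -> dim_lt W [set: V] ->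
  (exists Wb : set V, subspace Wb /\ W `<=` Wb /\ dim_lt Wb [set: V] /\
     stable a Wb /\ stable b Wb /\ stable c Wb) /\
  (finite_dim W ->
   exists Wb : set V, subspace Wb /\ W `<=` Wb /\ dim_lt Wb [set: V] /\
     stable a Wb /\ stable b Wb /\ stable c Wb /\ finite_dim Wb).
Proof.
move=> Vinf qa qb qc hrel _ Wsub wW WltV.
have [a0 [a1 qA]] := @quad_rel _ _ _ qa.
have [b0 [b1 qB]] := @quad_rel _ _ _ qb.
have [c0 [c1 qC]] := @quad_rel _ _ _ qc.
have Wsub' := Wsub; case: Wsub' => W0 [WD WZ].
pose U : set V := fun x => exists w1 w2 w3 w4, [/\ W w1, W w2, W w3, W w4 &
   x = w1 + a w2 + b w3 + a (b w4)].
have Usub : subspace U.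
  split; first by exists 0, 0, 0, 0; split => //; rewrite !linear0 !addr0.
  split.
    move=> x y [w1 [w2 [w3 [w4 [h1 h2 h3 h4 ->]]]]] [v1 [v2 [v3 [v4 [g1 g2 g3 g4 ->]]]]].
    exists (w1 + v1), (w2 + v2), (w3 + v3), (w4 + v4); split; try by apply: (WD).
    by rewrite !linearD add4.
  move=> k x [w1 [w2 [w3 [w4 [h1 h2 h3 h4 ->]]]]].
  exists (k *: w1), (k *: w2), (k *: w3), (k *: w4); split; try by apply: (WZ).
  by rewrite !linearZ !scalerDr.
case: (Usub) => U0 [UD UZ].
have UN x : U x -> U (- x) by move=> Ux; rewrite -scaleN1r; apply: (UZ).
have UB x y : U x -> U y -> U (x - y) by move=> Ux Uy; apply: (UD) => //; apply: (UN).
have WU x : W x -> U x.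
  by move=> Wx; exists x, 0, 0, 0; split => //; rewrite !linear0 !addr0.
have aWU x : W x -> U (a x).
  by move=> Wx; exists 0, x, 0, 0; split => //; rewrite !linear0 !addr0 add0r.
have bWU x : W x -> U (b x).
  by move=> Wx; exists 0, 0, x, 0; split => //; rewrite !linear0 !addr0 add0r.
have abWU x : W x -> U (a (b x)).
  by move=> Wx; exists 0, 0, 0, x; split => //; rewrite !linear0 !add0r.
have wWx x : W (w x) by apply: wW; exists x.
have cE v : c v = lambda *: v + w v - (a v + b v).
  by rewrite hrel addrC addKr.
have Uc x : U x -> U (a x) -> U (b x) -> U (c x).
  move=> Ux Uax Ubx; rewrite cE; apply: (UB); last exact: UD.
  by apply: (UD); [apply: (UZ) | apply: (WU)].
have key x : U x -> U (a x) -> U (b x) -> U (a (b x)) -> U (b (a x)).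
  move=> Ux Uax Ubx Uabx.
  pose y := c x.
  have Uy : U y by exact: Uc.
  have Ucy : U (c y) by rewrite /y qC; apply: (UD); apply: (UZ).
  have Uayby : U (a y + b y).
    have -> : a y + b y = lambda *: y + w y - c y by rewrite hrel addrK.
    apply: (UB) => //; apply: (UD); [exact: UZ | exact: WU].
  have Uay : U (a y).
    rewrite /y cE !(linearD, linearB, linearN, linearZ).
    uc UD UN UZ; rewrite ?qA; uc UD UN UZ => //; exact: aWU.
  have Uby : U (b y).
    have -> : b y = (a y + b y) - a y by rewrite addrC addKr.
    exact: UB.
  have Ubb : U (b (b x)) by rewrite qB; apply: (UD); apply: (UZ).
  have Us : U (b (a x) + b (b x)).
    have P : U (lambda *: b x + b (w x)) by apply: (UD); [apply: (UZ) | apply: (bWU)].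
    have -> : b (a x) + b (b x) = (lambda *: b x + b (w x)) - b y.
      have E : b y = lambda *: b x + b (w x) - (b (a x) + b (b x)).
        by rewrite /y cE !(linearD, linearB, linearN, linearZ) ?opprD.
      by rewrite E opprB [RHS]addrC subrK.
    exact: UB.
  have -> : b (a x) = (b (a x) + b (b x)) - b (b x) by rewrite addrK.
  exact: UB.
have stA : stable a U.
  move=> _ [x [w1 [w2 [w3 [w4 [h1 h2 h3 h4 ->]]]]] <-].
  rewrite !linearD; apply: (UD); [apply: (UD); [apply: (UD)|]|].
  - exact: aWU.
  - by rewrite qA; apply: (UD); apply: (UZ); [apply: (aWU) | apply: (WU)].
  - exact: abWU.
  - by rewrite qA; apply: (UD); apply: (UZ); [apply: (abWU) | apply: (bWU)].
have stB : stable b U.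
  move=> _ [x [w1 [w2 [w3 [w4 [h1 h2 h3 h4 ->]]]]] <-].
  rewrite !linearD; apply: (UD); [apply: (UD); [apply: (UD)|]|].
  - exact: bWU.
  - apply: (key); [exact: WU | exact: aWU | exact: bWU | exact: abWU].
  - by rewrite qB; apply: (UD); apply: (UZ); [apply: (bWU) | apply: (WU)].
  - apply: (key); [exact: bWU | exact: abWU | |].
      by rewrite qB; apply: (UD); apply: (UZ); [apply: (bWU) | apply: (WU)].
    by rewrite qB linearD !linearZ; apply: (UD); apply: (UZ); [apply: (abWU) | apply: (aWU)].
have stC : stable c U.
  move=> _ [x Ux <-]; apply: Uc => //; [apply: stA | apply: stB]; by exists x.
have WsubU : W `<=` U by move=> x /WU.
have span_of BW : is_basis W BW -> exists BU,
    BU `<=` (id @` BW `|` a @` BW `|` b @` BW `|` (fun v => a (b v)) @` BW) /\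
    is_basis U BU.
  move=> [BWW [_ BWsp]].
  pose S := id @` BW `|` a @` BW `|` b @` BW `|` (fun v => a (b v)) @` BW.
  have Sspan (f : V -> V) : f @` BW `<=` S ->
      (forall (s : seq V) (cf : V -> F), f (\sum_(v <- s) cf v *: v) = \sum_(v <- s) cf v *: f v) ->
      forall x, W x -> lspan S (f x).
    move=> fS fsum x /BWsp [s [cf [sB ->]]]; rewrite fsum.
    apply: subspace_sum; first exact: subspace_lspan.
    by move=> v /sB Bv; apply: lspanZ; apply: lspan_sub; apply: fS; exists v.
  apply: basis_of_span => //.
    move=> x [[[[v Bv <-]|[v Bv <-]]|[v Bv <-]]|[v Bv <-]].
    - by apply: (WU); apply: (BWW).
    - by apply: (aWU); apply: (BWW).
    - by apply: (bWU); apply: (BWW).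
    - by apply: (abWU); apply: (BWW).
  move=> x [w1 [w2 [w3 [w4 [h1 h2 h3 h4 ->]]]]].
  have LS := subspace_lspan S; case: LS => _ [LD _].
  apply: (LD); [apply: (LD); [apply: (LD)|]|].
  - apply: (Sspan id) => //; first by move=> _ [v Bv <-]; left; left; left; exists v.
  - apply: (Sspan a) => //; first by move=> _ [v Bv <-]; left; left; right; exists v.
    by move=> s cf; rewrite linear_sum; apply: eq_bigr => v _; rewrite linearZ.
  - apply: (Sspan b) => //; first by move=> _ [v Bv <-]; left; right; exists v.
    by move=> s cf; rewrite linear_sum; apply: eq_bigr => v _; rewrite linearZ.
  - apply: (Sspan (fun v => a (b v))) => //; first by move=> _ [v Bv <-]; right; exists v.
    by move=> s cf; rewrite !linear_sum; apply: eq_bigr => v _; rewrite !linearZ.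
have [BVi [BVib BViinf]] := Vinf.
have fin_case BW : is_basis W BW -> finite_set BW -> exists BU,
    is_basis U BU /\ finite_set BU /\ dim_lt U [set: V].
  move=> BWb BWfin; have [BU [BUS BUb]] := span_of BW BWb.
  have BUfin : finite_set BU.
    apply: sub_finite_set BUS _.
    by rewrite !finite_setU; do !split; apply: finite_image.
  exists BU; split => //; split => //.
  exists BU, BVi; split => //; split => // le.
  by apply: BViinf; apply: card_le_finite le BUfin.
split.
  exists U; split => //; split => //; split => //.
  have [BW [BV [BWb [BVb nle]]]] := WltV.
  case: (pselect (finite_set BW)) => BWfin.
    by have [BU [_ [_ ?]]] := fin_case BW BWb BWfin.
  have [BU [BUS BUb]] := span_of BW BWb.
  exists BU, BV; split => //; split => // le.
  apply: nle; apply: (@card_le4 _ _ BW id a b (fun v => a (b v)) BV) => //.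
  exact: card_le_trans le (subset_card_le BUS).
move=> [BW [BWb BWfin]].
have [BU [BUb [BUfin lt]]] := fin_case BW BWb BWfin.
exists U; do 6!(split => //); exists BU; split => //.
Qed.
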